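(* Let $(\omega,c)\in\mathbb{R}^2$ satisfy: $\omega>c^2/4$, or $\omega=c^2/4$ and $c>0$. Then, as $\eta_3\to\alpha_1$ with $\eta_3\in(\alpha_0,\alpha_1)$, $$k\to\begin{cases}1&\text{if }\omega>c^2/4,\\ \frac1{\sqrt2}&\text{if }\omega=c^2/4\text{ and }c>0,\end{cases}\qquad \beta^2\to\begin{cases}\dfrac{2\sqrt\omega+c}{2\sqrt\omega-c}&\text{if }\omega>c^2/4,\\ \infty&\text{if }\omega=c^2/4\text{ and }c>0.\end{cases}$$
   Context: $\alpha_0=\tfrac13(4c+\sqrt{48\omega+4c^2})$, $\alpha_1=4\sqrt\omega+2c$, $A(x)=-3x^2+8cx+64\omega$. For $\eta_3\in(\alpha_0,\alpha_1)$: $\eta_1=\frac{-\eta_3+4c-\sqrt{A(\eta_3)}}{2}<0$, $\eta_2=\frac{-\eta_3+4c+\sqrt{A(\eta_3)}}{2}\in(0,\eta_3)$, $k\in(0,1)$ with $k^2=\frac{-\eta_1(\eta_3-\eta_2)}{\eta_3(\eta_2-\eta_1)}$, and $\beta^2=-\eta_3k^2/\eta_1$. *)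

(* Defs.v *)
From HB Require Import structures.
From mathcomp Require Import all_boot all_order all_algebra.
From mathcomp Require Import all_classical all_reals all_analysis.
Set Implicit Arguments. Unset Strict Implicit. Unset Printing Implicit Defensive.
Import Order.TTheory GRing.Theory Num.Theory.
Import numFieldNormedType.Exports.
Local Open Scope ring_scope.
Local Open Scope classical_set_scope.

Section Defs.
Variable R : realType.
Implicit Types (w c x : R).

Definition alpha0 w c : R := (4 * c + Num.sqrt (48 * w + 4 * c ^+ 2)) / 3.
Definition alpha1 w c : R := 4 * Num.sqrt w + 2 * c.
Definition Apoly w c x : R := - 3 * x ^+ 2 + 8 * c * x + 64 * w.
Definition eta1 w c x : R := (- x + 4 * c - Num.sqrt (Apoly w c x)) / 2.
Definition eta2 w c x : R := (- x + 4 * c + Num.sqrt (Apoly w c x)) / 2.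
(* k^2 as a function of eta3 = x *)
Definition ksq w c x : R :=
  (- eta1 w c x * (x - eta2 w c x)) / (x * (eta2 w c x - eta1 w c x)).
Definition kmod w c x : R := Num.sqrt (ksq w c x).
Definition betasq w c x : R := - x * ksq w c x / eta1 w c x.
Definition eta3_dom w c : set R := [set x | alpha0 w c < x < alpha1 w c].
End Defs.

(* Main.v *)
Require Import Defs.
From HB Require Import structures.
From mathcomp Require Import all_boot all_order all_algebra.
From mathcomp Require Import all_classical all_reals all_analysis.
Import Order.TTheory GRing.Theory Num.Theory.
Import numFieldNormedType.Exports.
Local Open Scope ring_scope.
Local Open Scope classical_set_scope.

Section S.
Variable R : realType.
Variables w c : R.

Lemma Apoly_cvg (a : R) : Apoly w c x @[x --> a] --> Apoly w c a.
Proof.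
rewrite /Apoly.
apply: cvgD; [apply: cvgD|].
- apply: cvgM. exact: cvg_cst. rewrite expr2. under eq_fun do rewrite expr2. apply: cvgM; exact: cvg_id.
- apply: cvgM. exact: cvg_cst. exact: cvg_id.
- exact: cvg_cst.
Qed.

Lemma sqA_cvg (a : R) : Num.sqrt (Apoly w c x) @[x --> a] --> Num.sqrt (Apoly w c a).
Proof. apply: continuous_cvg. exact: sqrt_continuous. exact: Apoly_cvg. Qed.

Lemma eta1_cvg (a : R) : eta1 w c x @[x --> a] --> eta1 w c a.
Proof.
rewrite /eta1. apply: cvgM; last exact: cvg_cst.
apply: cvgD; last (apply: cvgN; exact: sqA_cvg).
apply: cvgD; last exact: cvg_cst. apply: cvgN; exact: cvg_id.
Qed.

Lemma eta2_cvg (a : R) : eta2 w c x @[x --> a] --> eta2 w c a.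
Proof.
rewrite /eta2. apply: cvgM; last exact: cvg_cst.
apply: cvgD; last exact: sqA_cvg.
apply: cvgD; last exact: cvg_cst. apply: cvgN; exact: cvg_id.
Qed.

Lemma ksq_cvg (a : R) : a * (eta2 w c a - eta1 w c a) != 0 ->
  ksq w c x @[x --> a] --> ksq w c a.
Proof.
move=> h. rewrite /ksq. apply: cvgM.
  apply: cvgM. apply: cvgN; exact: eta1_cvg.
  apply: cvgD. exact: cvg_id. apply: cvgN; exact: eta2_cvg.
apply: cvgV => //. apply: cvgM. exact: cvg_id.
apply: cvgD. exact: eta2_cvg. apply: cvgN; exact: eta1_cvg.
Qed.

Lemma betasq_cvg (a : R) : a * (eta2 w c a - eta1 w c a) != 0 -> eta1 w c a != 0 ->
  betasq w c x @[x --> a] --> betasq w c a.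
Proof.
move=> h h1. rewrite /betasq. apply: cvgM.
  apply: cvgM. apply: cvgN; exact: cvg_id. exact: ksq_cvg.
apply: cvgV => //. exact: eta1_cvg.
Qed.

End S.
From mathcomp Require Import ring lra.

Definition rr {R : realType} (c x : R) := Num.sqrt (4 * c - x).
Definition qq {R : realType} (c x : R) := Num.sqrt (3 * x + 4 * c).
Definition NN {R : realType} (c x : R) := x - rr c x * (rr c x + qq c x) / 2.
Definition GG {R : realType} (c x : R) := (qq c x - rr c x) * NN c x / (2 * x * qq c x).

Lemma alg_ksq (R : realType) (x q r c : R) : r ^+ 2 = 4 * c - x -> q != 0 -> r != 0 -> x != 0 -> q - r != 0 ->
  (- ((- x + 4 * c - q * r) / 2) * (x - (- x + 4 * c + q * r) / 2)) /
  (x * ((- x + 4 * c + q * r) / 2 - (- x + 4 * c - q * r) / 2))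
  = (q - r) * (x - r * (r + q) / 2) / (2 * x * q).
Proof.
move=> h hq hr hx hqr.
have -> : - x + 4 * c = r ^+ 2 by rewrite h; ring.
field.
have -> : r ^+ 2 + q * r - (r ^+ 2 - q * r) = 2 * (q * r) by ring.
by rewrite hq hx /= !mulf_neq0 // pnatr_eq0.
Qed.

Lemma alg_beta (R : realType) (x q r c : R) : r ^+ 2 = 4 * c - x -> q != 0 -> r != 0 -> x != 0 -> q - r != 0 ->
  - x * ((q - r) * (x - r * (r + q) / 2) / (2 * x * q)) / ((- x + 4 * c - q * r) / 2)
  = (x - r * (r + q) / 2) / (q * r).
Proof.
move=> h hq hr hx hqr.
have -> : - x + 4 * c = r ^+ 2 by rewrite h; ring.
have -> : r ^+ 2 - q * r = - (r * (q - r)) by ring.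
field. by rewrite hr hq hqr hx.
Qed.

Lemma rr_cvg {R : realType} (c a : R) : rr c x @[x --> a] --> rr c a.
Proof.
rewrite /rr; apply: continuous_cvg; first exact: sqrt_continuous.
apply: cvgD; first exact: cvg_cst. apply: cvgN; exact: cvg_id.
Qed.

Lemma qq_cvg {R : realType} (c a : R) : qq c x @[x --> a] --> qq c a.
Proof.
rewrite /qq; apply: continuous_cvg; first exact: sqrt_continuous.
apply: cvgD; last exact: cvg_cst. apply: cvgM; [exact: cvg_cst|exact: cvg_id].
Qed.

Lemma NN_cvg {R : realType} (c a : R) : NN c x @[x --> a] --> NN c a.
Proof.
have hr := rr_cvg c a. have hq := qq_cvg c a.
rewrite /NN; apply: cvgD; first exact: cvg_id. apply: cvgN.
apply: cvgM; last exact: cvg_cst. apply: cvgM => //. exact: cvgD.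
Qed.

Lemma GG_cvg {R : realType} (c a : R) : 2 * a * qq c a != 0 -> GG c x @[x --> a] --> GG c a.
Proof.
move=> h.
have hr : rr c x @[x --> a] --> rr c a.
  rewrite /rr; apply: continuous_cvg; first exact: sqrt_continuous.
  apply: cvgD; first exact: cvg_cst. apply: cvgN; exact: cvg_id.
have hq : qq c x @[x --> a] --> qq c a.
  rewrite /qq; apply: continuous_cvg; first exact: sqrt_continuous.
  apply: cvgD; last exact: cvg_cst. apply: cvgM; [exact: cvg_cst|exact: cvg_id].
have hN : NN c x @[x --> a] --> NN c a.
  rewrite /NN; apply: cvgD; first exact: cvg_id. apply: cvgN.
  apply: cvgM; last exact: cvg_cst. apply: cvgM => //. exact: cvgD.
rewrite /GG; apply: cvgM.
  apply: cvgM => //. apply: cvgD => //. exact: cvgN.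
apply: cvgV => //. apply: cvgM => //. apply: cvgM; [exact: cvg_cst|exact: cvg_id].
Qed.

Theorem lemma3p6 (R : realType) (w c : R) :
  (c ^+ 2 / 4 < w \/ (w = c ^+ 2 / 4 /\ 0 < c)) ->
  (c ^+ 2 / 4 < w ->
     kmod w c x @[x --> within (eta3_dom w c) (nbhs (alpha1 w c))] --> (1 : R) /\
     betasq w c x @[x --> within (eta3_dom w c) (nbhs (alpha1 w c))] -->
       ((2 * Num.sqrt w + c) / (2 * Num.sqrt w - c) : R)) /\
  (w = c ^+ 2 / 4 -> 0 < c ->
     kmod w c x @[x --> within (eta3_dom w c) (nbhs (alpha1 w c))] -->
       (1 / Num.sqrt 2 : R) /\
     betasq w c x @[x --> within (eta3_dom w c) (nbhs (alpha1 w c))] --> +oo).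
Proof.
move=> _; split.
- move=> hw.
  have w0 : 0 <= w by have := sqr_ge0 c; lra.
  have s0 : 0 <= Num.sqrt w := sqrtr_ge0 w.
  have ss : Num.sqrt w ^+ 2 = w := sqr_sqrtr w0.
  set s := Num.sqrt w in s0 ss *.
  have [d1 d2] : 0 < 2 * s - c /\ 0 < 2 * s + c by nra.
  have hA : Apoly w c (alpha1 w c) = (2 * (2 * s - c)) ^+ 2 by rewrite /Apoly /alpha1 -/s -ss; ring.
  have hT : Num.sqrt (Apoly w c (alpha1 w c)) = 2 * (2 * s - c).
    by rewrite hA sqrtr_sqr ger0_norm //; lra.
  have he1 : eta1 w c (alpha1 w c) = - (2 * (2 * s - c)) by rewrite /eta1 hT /alpha1 -/s; field.
  have he2 : eta2 w c (alpha1 w c) = 0 by rewrite /eta2 hT /alpha1 -/s; field.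
  have a10 : alpha1 w c != 0 by rewrite /alpha1 -/s; apply/eqP; lra.
  have nz : alpha1 w c * (eta2 w c (alpha1 w c) - eta1 w c (alpha1 w c)) != 0.
    by rewrite he1 he2 mulf_neq0 //; apply/eqP; lra.
  have ne1 : eta1 w c (alpha1 w c) != 0 by rewrite he1; apply/eqP; lra.
  have hk : ksq w c (alpha1 w c) = 1.
    rewrite /ksq he1 he2; field. by rewrite a10 andbT; apply/eqP; lra.
  split.
  + have H : kmod w c x @[x --> alpha1 w c] --> kmod w c (alpha1 w c).
      rewrite /kmod; apply: continuous_cvg; first exact: sqrt_continuous. exact: ksq_cvg.
    have E : kmod w c (alpha1 w c) = 1 by rewrite /kmod hk sqrtr1.
    rewrite E in H. exact: cvg_within_filter H.
  + have H := @betasq_cvg R w c _ nz ne1.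
    have E : betasq w c (alpha1 w c) = (2 * s + c) / (2 * s - c).
      rewrite /betasq hk he1 /alpha1 -/s; field. by apply/eqP; lra.
    rewrite E in H. exact: cvg_within_filter H.
- move=> hw c0.
  have hs : Num.sqrt w = c / 2.
    have -> : w = (c / 2) ^+ 2 by rewrite hw; field.
    by rewrite sqrtr_sqr ger0_norm //; lra.
  have ha1 : alpha1 w c = 4 * c by rewrite /alpha1 hs; field.
  have ha0 : alpha0 w c = 8 * c / 3.
    rewrite /alpha0 hw.
    have -> : 48 * (c ^+ 2 / 4) + 4 * c ^+ 2 = (4 * c) ^+ 2 by field.
    rewrite sqrtr_sqr ger0_norm; last lra. by field.
  rewrite ha1.
  set F := within (eta3_dom w c) (nbhs (4 * c)).
  have hD : \forall x \near F, 8 * c / 3 < x < 4 * c.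
    apply: filterS (withinT (eta3_dom w c) _) => x.
    by rewrite /eta3_dom /= ha0 ha1.
  have key : \forall x \near F, ksq w c x = GG c x /\
      betasq w c x = NN c x / (qq c x * rr c x).
    apply: filterS hD => x /andP[h1 h2].
    have r0 : 0 < rr c x by rewrite /rr sqrtr_gt0; lra.
    have q0 : 0 < qq c x by rewrite /qq sqrtr_gt0; lra.
    have rq : rr c x < qq c x by rewrite /rr /qq ltr_sqrt; lra.
    have hr2 : rr c x ^+ 2 = 4 * c - x by rewrite sqr_sqrtr //; lra.
    have hA : Num.sqrt (Apoly w c x) = qq c x * rr c x.
      rewrite /qq /rr -sqrtrM; last lra.
      congr Num.sqrt; rewrite /Apoly hw; by field.
    have nq : qq c x != 0 by rewrite gt_eqF.
    have nr : rr c x != 0 by rewrite gt_eqF.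
    have nx : x != 0 by apply/eqP; lra.
    have nqr : qq c x - rr c x != 0 by rewrite subr_eq0 gt_eqF.
    have ek : ksq w c x = GG c x.
      by rewrite /ksq /eta1 /eta2 hA /GG /NN; apply: alg_ksq.
    split => //.
    by rewrite /betasq ek /GG /NN /eta1 hA; apply: alg_beta.
  have q0 : 0 < qq c (4 * c) by rewrite /qq sqrtr_gt0; lra.
  have r0 : rr c (4 * c) = 0 by rewrite /rr subrr sqrtr0.
  have nz : 2 * (4 * c) * qq c (4 * c) != 0.
    by rewrite !mulf_neq0 // ?gt_eqF //; lra.
  have HG := @GG_cvg R c _ nz.
  have EG : GG c (4 * c) = 1 / 2.
    rewrite /GG /NN r0; field. by rewrite gt_eqF //= gt_eqF.
  rewrite EG in HG.
  have Hk : ksq w c x @[x --> F] --> (1 / 2 : R).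
    apply: (cvg_trans (near_eq_cvg (f := GG c) _) (cvg_within_filter _ HG)).
    by apply: filterS key => x [].
  split.
  + have -> : (1 / Num.sqrt 2 : R) = Num.sqrt (1 / 2).
      by rewrite !div1r sqrtrV.
    rewrite /kmod; apply: continuous_cvg => //; exact: sqrt_continuous.
  + have HN : NN c x @[x --> F] --> (4 * c : R).
      have E : NN c (4 * c) = 4 * c by rewrite /NN r0 mul0r mul0r subr0.
      rewrite -[X in _ --> X]E. apply: cvg_within_filter. exact: NN_cvg.
    have HT : (qq c x * rr c x) @[x --> F] --> (0 : R).
      rewrite -(mulr0 (qq c (4 * c))) -[X in _ * X]r0.
      apply: cvg_within_filter. apply: cvgM; [exact: qq_cvg|exact: rr_cvg].
    apply/cvgryPgt => A.
    have h1 : \forall x \near F, 2 * c < NN c x.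
      by apply: (cvgr_gt _ HN); lra.
    have e0 : 0 < 2 * c / (`|A| + 1) by apply: divr_gt0; [lra|have := normr_ge0 A; lra].
    have h2 : \forall x \near F, qq c x * rr c x < 2 * c / (`|A| + 1).
      exact: (cvgr_lt _ HT).
    apply: (filterS _ (filterI key (filterI hD (filterI h1 h2)))).
    move=> x [[_ ->] [/andP[x1 x2] [n1 t1]]].
    have r0' : 0 < rr c x by rewrite /rr sqrtr_gt0; lra.
    have q0' : 0 < qq c x by rewrite /qq sqrtr_gt0; lra.
    have t0 : 0 < qq c x * rr c x by apply: mulr_gt0.
    rewrite ltr_pdivlMr //.
    have hA0 := normr_ge0 A.
    have hAA : A * (qq c x * rr c x) <= `|A| * (qq c x * rr c x).
      apply: ler_wpM2r; [exact: ltW|exact: ler_norm].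
    have hlt : (`|A| + 1) * (qq c x * rr c x) < (`|A| + 1) * (2 * c / (`|A| + 1)).
      by rewrite ltr_pM2l //; lra.
    have heq : (`|A| + 1) * (2 * c / (`|A| + 1)) = 2 * c.
      field. apply/eqP; lra.
    lra.
Qed.
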